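(* Let $p$ be a prime and let $c:\mathbb{Z}\to\{B,R\}$ be a periodic coloring such that for every positive integer $d$ with $p\nmid d$ and every $a\in\mathbb{Z}$, the values $c(a),c(a+d),c(a+2d),c(a+3d)$ are not all equal. Then every period $T\ge1$ of $c$ (i.e. every $T$ with $c(n+T)=c(n)$ for all $n$) satisfies $T\ge p$. *)

(* Defs.v *)
From Stdlib Require Import ZArith Znumtheory.
Open Scope Z_scope.

Inductive color : Type := B | R.

Definition is_period (c : Z -> color) (T : Z) : Prop :=
  forall n : Z, c (n + T) = c n.

Definition periodic (c : Z -> color) : Prop :=
  exists T : Z, 1 <= T /\ is_period c T.

(* Main.v *)
Require Import Defs.
From Stdlib Require Import ZArith Znumtheory Lia.
Open Scope Z_scope.

Theorem theorem6 (p : Z) (hp : prime p) (c : Z -> color)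
  (hper : periodic c)
  (hnoAP : forall d a : Z, 0 < d -> ~ (p | d) ->
     ~ (c a = c (a + d) /\ c a = c (a + 2 * d) /\ c a = c (a + 3 * d))) :
  forall T : Z, 1 <= T -> is_period c T -> p <= T.
Proof.
  intros T hT hTp.
  destruct (Z_le_gt_dec p T) as [h|h]; [exact h|].
  exfalso.
  apply (hnoAP T 0); [lia| |].
  - intro hd. apply Z.divide_pos_le in hd; lia.
  - unfold is_period in hTp.
    assert (e1 : c (0 + T) = c 0) by apply hTp.
    assert (e2 : c (0 + 2 * T) = c 0).
    { replace (0 + 2 * T) with ((0 + T) + T) by ring. rewrite hTp. apply hTp. }
    assert (e3 : c (0 + 3 * T) = c 0).
    { replace (0 + 3 * T) with ((0 + 2 * T) + T) by ring. rewrite hTp. exact e2. }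
    rewrite e1, e2, e3. auto.
Qed.
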